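(* There exists a topological dynamical system $(X,T)$, with $X$ containing at least two points, such that the whole space $X$ is a Banach scrambled set.
   Context: A topological dynamical system $(X,T)$ consists of a non-empty compact metric space $(X,d)$ and a continuous map $T:X\to X$. $\mathbb{Z}_+$ denotes the non-negative integers. A set $F\subset\mathbb{Z}_+$ has Banach density one if for every $\lambda<1$ there is $N\ge1$ such that $\#(F\cap I)\ge\lambda\,\#(I)$ for every interval $I\subset\mathbb{Z}_+$ of integers with $\#(I)\ge N$. A pair $(x,y)\in X^2$ is Banach proximal if for every $\varepsilon>0$ the set $\{n\in\mathbb{Z}_+: d(T^nx,T^ny)<\varepsilon\}$ has Banach density one. A pair is asymptotic if $\lim_{n\to\infty}d(T^nx,T^ny)=0$. A subset $S\subset X$ with at least two points is Banach scrambled if every pair of distinct points $x,y\in S$ is Banach proximal but not asymptotic. *)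

(* Defs.v *)
From Stdlib Require Import Reals List ClassicalEpsilon.
Open Scope R_scope.

Definition is_metric {X : Type} (d : X -> X -> R) : Prop :=
  (forall x y, 0 <= d x y) /\
  (forall x y, d x y = 0 <-> x = y) /\
  (forall x y, d x y = d y x) /\
  (forall x y z, d x z <= d x y + d y z).

Definition is_open {X : Type} (d : X -> X -> R) (U : X -> Prop) : Prop :=
  forall x, U x -> exists r, 0 < r /\ forall y, d x y < r -> U y.

Definition is_compact {X : Type} (d : X -> X -> R) : Prop :=
  forall (I : Type) (U : I -> X -> Prop),
    (forall i, is_open d (U i)) ->
    (forall x, exists i, U i x) ->
    exists l : list I, forall x, exists i, In i l /\ U i x.

Definition is_continuous {X : Type} (d : X -> X -> R) (T : X -> X) : Prop :=
  forall x eps, 0 < eps -> exists delta, 0 < delta /\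
    forall y, d x y < delta -> d (T x) (T y) < eps.

Definition is_TDS {X : Type} (d : X -> X -> R) (T : X -> X) : Prop :=
  inhabited X /\ is_metric d /\ is_compact d /\ is_continuous d T.

Fixpoint count_in (F : nat -> Prop) (a L : nat) : nat :=
  match L with
  | O => O
  | S L' => (if excluded_middle_informative (F (a + L')%nat) then 1 else 0)
            + count_in F a L'
  end%nat.

(* F has Banach density one. Intervals of integers in Z_+ are
   {a, ..., a+L-1}, of cardinality L. *)
Definition banach_density_one (F : nat -> Prop) : Prop :=
  forall lam : R, lam < 1 ->
    exists N : nat, (1 <= N)%nat /\
      forall a L : nat, (N <= L)%nat -> INR (count_in F a L) >= lam * INR L.

Definition banach_proximal {X : Type} (d : X -> X -> R) (T : X -> X) (x y : X)
  : Prop :=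
  forall eps, 0 < eps ->
    banach_density_one (fun n => d (Nat.iter n T x) (Nat.iter n T y) < eps).

Definition asymptotic {X : Type} (d : X -> X -> R) (T : X -> X) (x y : X)
  : Prop :=
  forall eps, 0 < eps -> exists M : nat, forall n : nat, (M <= n)%nat ->
    d (Nat.iter n T x) (Nat.iter n T y) < eps.

Definition banach_scrambled {X : Type} (d : X -> X -> R) (T : X -> X)
  (S : X -> Prop) : Prop :=
  (exists x y, S x /\ S y /\ x <> y) /\
  (forall x y, S x -> S y -> x <> y ->
     banach_proximal d T x y /\ ~ asymptotic d T x y).

(* Main.v *)
Require Import Defs.
From Stdlib Require Import Reals.
From Stdlib Require Import Arith Lia Lra ClassicalEpsilon Classical FunctionalExtensionality ProofIrrelevance List.
Import ListNotations.
Open Scope R_scope.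
Local Open Scope nat_scope.

Fixpoint Vf (f i n : nat) : nat :=
  match f with O => 0 | S f' => n mod (i+2) + Vf f' (S i) (n / (i+2)) end.

Lemma Vf_zero : forall f i, Vf f i 0 = 0.
Proof. induction f; intros; simpl; [reflexivity|]. rewrite Nat.Div0.mod_0_l, Nat.Div0.div_0_l. rewrite IHf. reflexivity. Qed.

Lemma Vf_enough : forall f g i n, n <= f -> n <= g -> Vf f i n = Vf g i n.
Proof.
  induction f; intros g i n Hf Hg.
  - assert (n = 0) by lia. subst. rewrite Vf_zero. now rewrite Vf_zero.
  - destruct g.
    + assert (n = 0) by lia. subst. rewrite Vf_zero. now rewrite Vf_zero.
    + simpl. f_equal. destruct n.
      * rewrite Nat.Div0.div_0_l, !Vf_zero. reflexivity.
      * assert (S n / (i+2) < S n) by (apply Nat.div_lt; lia).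
        apply IHf; lia.
Qed.

Definition V i n := Vf n i n.

Lemma V_eq : forall i n, V i n = n mod (i+2) + V (S i) (n / (i+2)).
Proof.
  intros i n. unfold V. destruct n.
  - simpl. rewrite Nat.Div0.mod_0_l, Nat.Div0.div_0_l. reflexivity.
  - simpl Vf at 1. f_equal. apply Vf_enough.
    + assert (S n / (i+2) < S n) by (apply Nat.div_lt; lia). lia.
    + lia.
Qed.

Lemma V_decomp : forall i c h, c < i + 2 -> V i (c + (i+2)*h) = c + V (S i) h.
Proof.
  intros i c h Hc. rewrite V_eq.
  replace (c + (i+2)*h) with (c + h*(i+2)) by lia.
  rewrite Nat.Div0.mod_add, Nat.div_add by lia.
  rewrite Nat.mod_small, Nat.div_small by lia. reflexivity.
Qed.

Lemma V_split : forall i m, exists c h, c < i + 2 /\ m = c + (i+2)*h.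
Proof.
  intros i m. exists (m mod (i+2)), (m / (i+2)). split.
  - apply Nat.mod_upper_bound. lia.
  - pose proof (Nat.div_mod_eq m (i+2)). lia.
Qed.

Lemma V_0 : forall i, V i 0 = 0.
Proof. intros. reflexivity. Qed.

Lemma V_pos : forall n i, 0 < n -> 0 < V i n.
Proof.
  intros n. induction n as [n IH] using (well_founded_induction lt_wf).
  intros i Hn. destruct (V_split i n) as (c & h & Hc & ->).
  rewrite V_decomp by lia. destruct c; [|lia].
  simpl. apply IH; lia.
Qed.

Fixpoint Pl (i len : nat) : nat :=
  match len with O => 1 | S l => (i+2) * Pl (S i) l end.

Lemma Pl_pos : forall len i, 1 <= Pl i len.
Proof. induction len; intros; simpl; [lia|]. specialize (IHlen (S i)). lia. Qed.

Lemma Pl_ge : forall len i, len < Pl i len.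
Proof. induction len; intros; simpl; [lia|]. specialize (IHlen (S i)). lia. Qed.

Lemma Pl_S : forall RR i, Pl i (S RR) = Pl i RR * (i + RR + 2).
Proof.
  induction RR; intros.
  - simpl. lia.
  - change (Pl i (S (S RR))) with ((i+2) * Pl (S i) (S RR)). rewrite IHRR.
    change (Pl i (S RR)) with ((i+2) * Pl (S i) RR). lia.
Qed.

Lemma V_add : forall len i m, V i m <= i + len -> V i (m + Pl i len) = V i m + 1.
Proof.
  induction len; intros i m H; destruct (V_split i m) as (c & h & Hc & ->);
    rewrite V_decomp in * by lia.
  - simpl Pl. destruct (Nat.eq_dec c (i+1)); [lia|].
    replace (c + (i+2)*h + 1) with ((c+1) + (i+2)*h) by lia.
    rewrite V_decomp by lia. lia.
  - simpl Pl.
    replace (c + (i+2)*h + (i+2) * Pl (S i) len) with (c + (i+2)*(h + Pl (S i) len)) by lia.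
    rewrite V_decomp by lia. rewrite IHlen by lia. lia.
Qed.

Lemma V_noboth : forall len i m k, k < V i m ->
  ~ (V i (m + Pl i len) = S k /\ V i (m + Pl i (S len)) = S k).
Proof.
  induction len; intros i m k H [H1 H2]; destruct (V_split i m) as (c & h & Hc & ->);
    rewrite V_decomp in H by lia.
  - simpl Pl in *. destruct (Nat.eq_dec c (i+1)).
    + subst c.
      replace (i + 1 + (i+2)*h + 1) with (0 + (i+2)*(h+1)) in H1 by lia.
      replace (i + 1 + (i+2)*h + (i+2)*1) with ((i+1) + (i+2)*(h+1)) in H2 by lia.
      rewrite V_decomp in H1, H2 by lia. lia.
    + replace (c + (i+2)*h + 1) with ((c+1) + (i+2)*h) in H1 by lia.
      rewrite V_decomp in H1 by lia. lia.
  - change (Pl i (S len)) with ((i+2)*Pl (S i) len) in H1.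
    change (Pl i (S (S len))) with ((i+2)*Pl (S i) (S len)) in H2.
    replace (c + (i+2)*h + (i+2) * Pl (S i) len) with (c + (i+2)*(h + Pl (S i) len)) in H1 by lia.
    replace (c + (i+2)*h + (i+2) * Pl (S i) (S len)) with (c + (i+2)*(h + Pl (S i) (S len))) in H2 by lia.
    rewrite V_decomp in H1 by lia. rewrite V_decomp in H2 by lia.
    assert (0 < V (S i) (h + Pl (S i) len)) by (apply V_pos; pose proof (Pl_pos len (S i)); lia).
    apply (IHlen (S i) h (k - c)); [lia|]. split; lia.
Qed.

Lemma V_block : forall RR i r q, r < Pl i RR -> V i (r + Pl i RR * q) = V i r + V (i + RR) q.
Proof.
  induction RR; intros i r q Hr.
  - simpl in *. assert (r = 0) by lia. subst. rewrite Nat.add_0_r. rewrite Nat.add_0_r. reflexivity.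
  - simpl Pl in *. destruct (V_split i r) as (c & r' & Hc & ->).
    assert (r' < Pl (S i) RR) by nia.
    replace (c + (i+2)*r' + (i+2) * Pl (S i) RR * q) with (c + (i+2)*(r' + Pl (S i) RR * q)) by lia.
    rewrite !V_decomp by lia. rewrite IHRR by lia.
    replace (S i + RR) with (i + S RR) by lia. lia.
Qed.

Lemma V_small : forall i q, q < i + 2 -> V i q = q.
Proof. intros. replace q with (q + (i+2)*0) by lia. rewrite V_decomp by lia. rewrite V_0. lia. Qed.

Lemma count_S : forall F a L, count_in F a (S L) =
  ((if excluded_middle_informative (F (a + L)) then 1 else 0) + count_in F a L)%nat.
Proof. reflexivity. Qed.

Lemma count_ext : forall F G a b L, (forall i, (i < L)%nat -> (F (a+i) <-> G (b+i))) ->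
  count_in F a L = count_in G b L.
Proof.
  intros F G a b L. induction L; intros H; [reflexivity|].
  rewrite !count_S. rewrite IHL by (intros; apply H; lia).
  destruct (excluded_middle_informative (F (a+L))), (excluded_middle_informative (G (b+L)));
    try reflexivity; exfalso; firstorder (try lia).
  - apply n, (H L); auto.
  - apply n, (H L); auto.
Qed.

Lemma count_le_L : forall F a L, (count_in F a L <= L)%nat.
Proof. induction L; [simpl; lia|]. rewrite count_S. destruct excluded_middle_informative; lia. Qed.

Lemma count_mono : forall F G a L, (forall i, (i < L)%nat -> F (a+i) -> G (a+i)) ->
  (count_in F a L <= count_in G a L)%nat.
Proof.
  intros F G a L. induction L; intros H; [simpl; lia|].
  rewrite !count_S. specialize (IHL (fun i Hi => H i ltac:(lia))).
  destruct (excluded_middle_informative (F (a+L))), (excluded_middle_informative (G (a+L))); try lia.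
  exfalso. apply n, H; auto.
Qed.

Lemma count_compl : forall F a L, (count_in F a L + count_in (fun p => ~ F p) a L = L)%nat.
Proof.
  induction L; [reflexivity|]. rewrite !count_S.
  destruct (excluded_middle_informative (F (a+L))), (excluded_middle_informative (~ F (a+L))); try tauto; lia.
Qed.

Lemma count_or : forall F G a L,
  (count_in (fun p => F p \/ G p) a L <= count_in F a L + count_in G a L)%nat.
Proof.
  induction L; [simpl; lia|]. rewrite !count_S.
  destruct (excluded_middle_informative (F (a+L) \/ G (a+L))),
    (excluded_middle_informative (F (a+L))), (excluded_middle_informative (G (a+L))); try tauto; lia.
Qed.

Lemma count_app : forall F a L1 L2, count_in F a (L1 + L2) = (count_in F a L1 + count_in F (a + L1) L2)%nat.
Proof.
  intros F a L1 L2. induction L2.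
  - rewrite Nat.add_0_r. simpl. lia.
  - replace (L1 + S L2)%nat with (S (L1 + L2)) by lia. rewrite !count_S.
    replace (a + (L1 + L2))%nat with (a + L1 + L2)%nat by lia. lia.
Qed.

Lemma count_false : forall F a L, (forall p, ~ F p) -> count_in F a L = 0%nat.
Proof. induction L; intros H; [reflexivity|]. rewrite count_S. destruct excluded_middle_informative as [h|h].
 - exfalso; eapply H; eauto. - rewrite IHL; auto. Qed.

Lemma count_true : forall F a L, (forall p, F p) -> count_in F a L = L.
Proof. induction L; intros H; [reflexivity|]. rewrite count_S. destruct excluded_middle_informative as [h|h].
 - rewrite IHL; auto. - exfalso; apply h, H. Qed.

Lemma count_len_mono : forall F a L L', (L <= L')%nat -> (count_in F a L <= count_in F a L')%nat.
Proof. intros. replace L' with (L + (L' - L))%nat by lia. rewrite count_app. lia. Qed.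

Section Periodic.
Variable F : nat -> Prop.
Variable M : nat.
Hypothesis HF : forall n, F (n + M) <-> F n.

Lemma count_per_shift : forall a, count_in F a M = count_in F 0 M.
Proof.
  assert (Hs : forall a, count_in F (S a) M = count_in F a M).
  { intros a. pose proof (count_app F a 1 M) as E1. pose proof (count_app F a M 1) as E2.
    replace (M + 1)%nat with (1 + M)%nat in E2 by lia.
    assert (count_in F (a + M) 1 = count_in F a 1).
    { apply count_ext. intros i Hi. replace (a + M + i)%nat with ((a + i) + M)%nat by lia. apply HF. }
    replace (a + 1)%nat with (S a) in E1 by lia. lia. }
  induction a; [reflexivity|]. rewrite Hs. auto.
Qed.

Lemma count_per_mult : forall q a, count_in F a (q * M) = (q * count_in F 0 M)%nat.
Proof.
  induction q; intros a; [reflexivity|].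
  replace (S q * M)%nat with (M + q * M)%nat by lia. rewrite count_app, IHq, count_per_shift. lia.
Qed.

Lemma count_per_bound : (0 < M)%nat -> forall a L, (count_in F a L <= (L / M + 1) * count_in F 0 M)%nat.
Proof.
  intros HM a L. rewrite <- (count_per_mult (L / M + 1) a). apply count_len_mono.
  pose proof (Nat.div_mod_eq L M). pose proof (Nat.mod_upper_bound L M ltac:(lia)). nia.
Qed.
End Periodic.

Lemma lt_pow2 : forall t, t < 2 ^ t.
Proof. induction t; simpl; lia. Qed.

Lemma growth : forall c B, exists R, B * c ^ R <= Pl 0 R.
Proof.
  intros c B. set (R0 := 2 * c).
  assert (Hcl : forall t, (2*c) ^ t <= Pl 0 (R0 + t)).
  { induction t.
    - rewrite Nat.add_0_r. simpl. apply Pl_pos.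
    - replace (R0 + S t) with (S (R0 + t)) by lia. rewrite Pl_S.
      rewrite Nat.pow_succ_r'. unfold R0 in *. nia. }
  set (t := B * c ^ R0). exists (R0 + t).
  rewrite Nat.pow_add_r. specialize (Hcl t). rewrite Nat.pow_mul_l in Hcl.
  pose proof (lt_pow2 t). assert (B * c ^ R0 = t) by reflexivity.
  nia.
Qed.

Lemma block_count : forall R K Q, Q <= R + 2 ->
  count_in (fun r => V 0 r <= K) 0 (Q * Pl 0 R) <= Nat.min Q (K+1) * count_in (fun r => V 0 r <= K) 0 (Pl 0 R).
Proof.
  intros R K Q. induction Q; intros HQ; [simpl; lia|].
  replace (S Q * Pl 0 R) with (Q * Pl 0 R + Pl 0 R) by lia.
  rewrite count_app. simpl (0 + _).
  assert (Hb : count_in (fun r => V 0 r <= K) (Q * Pl 0 R) (Pl 0 R) =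
               count_in (fun r => V 0 r + Q <= K) 0 (Pl 0 R)).
  { apply count_ext. intros i Hi. replace (Q * Pl 0 R + i) with (i + Pl 0 R * Q) by lia.
    rewrite V_block by lia. rewrite Nat.add_0_l. rewrite (V_small R Q) by lia. simpl. tauto. }
  rewrite Hb. specialize (IHQ ltac:(lia)).
  destruct (le_lt_dec Q K).
  - assert (count_in (fun r => V 0 r + Q <= K) 0 (Pl 0 R) <= count_in (fun r => V 0 r <= K) 0 (Pl 0 R))
      by (apply count_mono; intros; lia).
    replace (Nat.min (S Q) (K+1)) with (Nat.min Q (K+1) + 1) by lia. nia.
  - assert (count_in (fun r => V 0 r + Q <= K) 0 (Pl 0 R) = 0).
    { assert (count_in (fun r => V 0 r + Q <= K) 0 (Pl 0 R) <= count_in (fun _ => False) 0 (Pl 0 R))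
        by (apply count_mono; intros; lia).
      pose proof (count_false (fun _:nat => False) 0 (Pl 0 R) (fun p h => h)). lia. }
    replace (Nat.min (S Q) (K+1)) with (Nat.min Q (K+1)) by lia. lia.
Qed.

Lemma cnt_bound : forall n K, count_in (fun r => V 0 r <= K) 0 (Pl 0 n) <= (K+1) ^ n.
Proof.
  induction n; intros K.
  - apply (count_le_L _ 0 1).
  - rewrite Pl_S. replace (Pl 0 n * (0 + n + 2)) with ((n+2) * Pl 0 n) by lia.
    rewrite block_count by lia. rewrite Nat.pow_succ_r'. specialize (IHn K). nia.
Qed.

Lemma window_count : forall R K a L,
  count_in (fun p => V 0 p < K) a L <= (L / Pl 0 R + 1) * (K+1) ^ R.
Proof.
  intros R K a L. set (M := Pl 0 R).
  assert (HM : 0 < M) by (pose proof (Pl_pos R 0); unfold M; lia).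
  eapply Nat.le_trans with (count_in (fun p => V 0 (p mod M) <= K) a L).
  { apply count_mono. intros i _ H.
    pose proof (Nat.div_mod_eq (a+i) M). pose proof (Nat.mod_upper_bound (a+i) M ltac:(lia)).
    assert (V 0 (a+i) = V 0 ((a+i) mod M) + V (0+R) ((a+i)/M)).
    { rewrite <- V_block by (unfold M in *; lia). f_equal. unfold M in *. lia. }
    lia. }
  eapply Nat.le_trans. apply (count_per_bound _ M); auto.
  - intros n. cbv beta. pose proof (Nat.Div0.mod_add n 1 M) as Hm. rewrite Nat.mul_1_l in Hm. rewrite Hm. tauto.
  - apply Nat.mul_le_mono_l.
    eapply Nat.le_trans with (count_in (fun r => V 0 r <= K) 0 M).
    + apply Nat.eq_le_incl, count_ext. intros i Hi. simpl. rewrite Nat.mod_small by lia. tauto.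
    + apply cnt_bound.
Qed.

Lemma dens_w : forall K (lam : R), (lam < 1)%R -> exists N, 1 <= N /\ forall a L, N <= L ->
  (INR (count_in (fun p => ~ (V 0 p < K)%nat) a L) >= lam * INR L)%R.
Proof.
  intros K lam Hl.
  destruct (INR_unbounded (/ (1 - lam))) as [r Hr].
  assert (Hpos : (0 < / (1 - lam))%R) by (apply Rinv_0_lt_compat; lra).
  assert (Hr1 : (1 <= INR r * (1 - lam))%R).
  { apply Rmult_gt_compat_r with (r := (1 - lam)%R) in Hr; [|lra].
    rewrite Rinv_l in Hr by lra. lra. }
  destruct (growth (K+1) (2 * r)) as [R HR].
  set (M := Pl 0 R) in *. assert (HM : 1 <= M) by apply Pl_pos.
  exists M. split; auto. intros a L HL.
  set (small := count_in (fun p => V 0 p < K) a L).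
  assert (Hs : small <= (L / M + 1) * (K+1) ^ R) by apply window_count.
  set (q := L / M) in *. set (c := (K+1)^R) in *.
  assert (Hq1 : 1 <= q).
  { unfold q. rewrite <- (Nat.div_same M) by lia. apply Nat.Div0.div_le_mono. auto. }
  assert (Hq2 : M * q <= L) by (apply Nat.Div0.mul_div_le).
  assert (Hsr : small * r <= L).
  { assert (small * r <= (q + 1) * c * r) by nia.
    assert ((q+1) * (2 * r * c) <= (q+1) * M) by nia.
    nia. }
  pose proof (count_compl (fun p => V 0 p < K) a L) as Hc. fold small in Hc.
  assert (E : INR (count_in (fun p => ~ (V 0 p < K)) a L) = (INR L - INR small)%R).
  { cbv beta in Hc. apply (f_equal INR) in Hc. rewrite plus_INR in Hc. lra. }
  rewrite E. apply le_INR in Hsr. rewrite mult_INR in Hsr.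
  assert (0 <= INR small)%R by apply pos_INR.
  assert (INR small <= INR small * (INR r * (1 - lam)))%R.
  { rewrite <- (Rmult_1_r (INR small)) at 1. apply Rmult_le_compat_l; lra. }
  assert (INR small * (INR r * (1 - lam)) <= INR L * (1 - lam))%R.
  { rewrite <- Rmult_assoc. apply Rmult_le_compat_r; lra. }
  lra.
Qed.

Definition Om := nat -> option nat.
Definition tr (n : nat) (o : option nat) : nat := match o with None => n | Some k => Nat.min k n end.
Definition agree n (s s' : Om) := forall m, m < n -> tr n (s m) = tr n (s' m).

Lemma tr_mono : forall m n o, m <= n -> tr m o = Nat.min (tr n o) m.
Proof. intros m n [k|] H; simpl; lia. Qed.

Lemma agree_mono : forall n m s s', agree n s s' -> m <= n -> agree m s s'.
Proof. intros n m s s' H Hm k Hk. rewrite (tr_mono m n) by lia. rewrite (tr_mono m n (s' k)) by lia.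
  rewrite H by lia. reflexivity. Qed.

Lemma agree_sym : forall n s s', agree n s s' -> agree n s' s.
Proof. intros n s s' H k Hk. symmetry. auto. Qed.

Lemma agree_trans : forall n s1 s2 s3, agree n s1 s2 -> agree n s2 s3 -> agree n s1 s3.
Proof. intros n s1 s2 s3 H1 H2 k Hk. rewrite H1 by auto. auto. Qed.

Lemma agree_0 : forall s s', agree 0 s s'.
Proof. intros s s' k Hk. lia. Qed.

Lemma tr_small : forall n o1 o2 k, tr n o1 = tr n o2 -> o1 = Some k -> k < n -> o2 = Some k.
Proof. intros n o1 o2 k H -> Hk. destruct o2 as [k'|]; simpl in H; [f_equal|]; lia. Qed.

Lemma tr_big : forall n o, (forall k, o = Some k -> n <= k) -> tr n o = n.
Proof. intros n [k|] H; simpl; auto. specialize (H k eq_refl). lia. Qed.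

Lemma agree_all_eq : forall s s', (forall n, agree n s s') -> s = s'.
Proof.
  intros s s' H. apply functional_extensionality. intros m.
  destruct (s m) as [k|] eqn:E1.
  - symmetry. apply (tr_small (S (Nat.max m k)) (s m) (s' m) k); auto. apply H. lia. lia.
  - destruct (s' m) as [k|] eqn:E2; auto.
    exfalso. assert (s m = Some k).
    { apply (tr_small (S (Nat.max m k)) (s' m) (s m) k); auto. symmetry. apply H. lia. lia. }
    congruence.
Qed.

Lemma least_ex : forall (P : nat -> Prop), (exists n, P n) -> exists n, P n /\ forall m, P m -> n <= m.
Proof.
  intros P [n Hn]. apply NNPP. intros Hno.
  assert (forall k, forall j, j <= k -> ~ P j).
  { induction k; intros j Hj HP.
    - apply Hno. exists j. split; auto. intros; lia.
    - destruct (Nat.eq_dec j (S k)); [|apply (IHk j); auto; lia].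
      subst. apply Hno. exists (S k). split; auto. intros m Hm.
      destruct (le_lt_dec (S k) m); auto. exfalso. apply (IHk m); auto; lia. }
  apply (H n n); auto.
Qed.

Definition D (s s' : Om) : R :=
  match excluded_middle_informative (exists n, ~ agree n s s') with
  | left H => ((/2) ^ (proj1_sig (constructive_indefinite_description _ (least_ex _ H))))%R
  | right _ => 0%R
  end.

Lemma D_spec : forall s s', (D s s' = 0%R /\ forall n, agree n s s') \/
  (exists N, D s s' = ((/2)^N)%R /\ ~ agree N s s' /\ forall m, m < N -> agree m s s').
Proof.
  intros s s'. unfold D. destruct excluded_middle_informative as [H|H].
  - right. destruct constructive_indefinite_description as [N [HN1 HN2]]. simpl.
    exists N. split; auto. split; auto. intros m Hm. apply NNPP. intros Hc. specialize (HN2 m Hc). lia.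
  - left. split; auto. intros n. apply NNPP. intros Hc. apply H. eauto.
Qed.

Lemma half_pow_pos : forall n, (0 < (/2)^n)%R.
Proof. intros. apply pow_lt. lra. Qed.

Lemma half_pow_lt : forall m n, m < n -> ((/2)^n < (/2)^m)%R.
Proof.
  intros m n H. induction H.
  - simpl. pose proof (half_pow_pos m). lra.
  - simpl. pose proof (half_pow_pos m0). lra.
Qed.

Lemma half_pow_le : forall m n, m <= n -> ((/2)^n <= (/2)^m)%R.
Proof. intros m n H. destruct (Nat.eq_dec m n); [subst; lra|]. left. apply half_pow_lt. lia. Qed.

Lemma D_lt : forall s s' n, (D s s' < (/2)^n)%R <-> agree n s s'.
Proof.
  intros s s' n. destruct (D_spec s s') as [[E H]|[N [E [H1 H2]]]]; rewrite E.
  - split; auto. intros; apply half_pow_pos.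
  - split.
    + intros Hl. destruct (le_lt_dec N n).
      * exfalso. pose proof (half_pow_le N n l). lra.
      * auto.
    + intros Ha. destruct (le_lt_dec N n).
      * exfalso. apply H1. eapply agree_mono; eauto.
      * apply half_pow_lt. auto.
Qed.

Lemma D_nonneg : forall s s', (0 <= D s s')%R.
Proof. intros. destruct (D_spec s s') as [[E H]|[N [E _]]]; rewrite E; [lra|]. left; apply half_pow_pos. Qed.

Lemma D_zero : forall s s', D s s' = 0%R <-> s = s'.
Proof.
  intros s s'. split.
  - intros E. apply agree_all_eq. intros n. apply D_lt. rewrite E. apply half_pow_pos.
  - intros <-. destruct (D_spec s s) as [[E H]|[N [E [H1 H2]]]]; auto.
    exfalso. apply H1. intros m _. reflexivity.
Qed.

Lemma D_sym : forall s s', D s s' = D s' s.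
Proof.
  intros s s'.
  destruct (D_spec s s') as [[E H]|[N [E [H1 H2]]]], (D_spec s' s) as [[E' H3]|[N' [E' [H1' H2']]]];
    rewrite E, E'; auto.
  - exfalso. apply H1'. apply agree_sym. auto.
  - exfalso. apply H1. apply agree_sym. auto.
  - destruct (lt_eq_lt_dec N N') as [[Hl|Hl]|Hl]; [| subst; auto |].
    + exfalso. apply H1. apply agree_sym. auto.
    + exfalso. apply H1'. apply agree_sym. auto.
Qed.

Lemma D_tri : forall s1 s2 s3, (D s1 s3 <= D s1 s2 + D s2 s3)%R.
Proof.
  intros s1 s2 s3. pose proof (D_nonneg s1 s2). pose proof (D_nonneg s2 s3).
  destruct (D_spec s1 s3) as [[E HH]|[N [E [H1 H2]]]]; rewrite E; [lra|].
  destruct (Rlt_or_le (D s1 s2) ((/2)^N)) as [Ha|Ha]; [|lra].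
  destruct (Rlt_or_le (D s2 s3) ((/2)^N)) as [Hb|Hb]; [|lra].
  exfalso. apply H1. apply D_lt in Ha, Hb. eapply agree_trans; eauto.
Qed.

Lemma Nf_ex : forall K (lam : R), exists N, (lam < 1)%R -> forall a L, N <= L ->
  (INR (count_in (fun p => ~ (V 0 p < K)%nat) a L) >= lam * INR L)%R.
Proof.
  intros K lam. destruct (Rlt_or_le lam 1) as [Hl|Hl].
  - destruct (dens_w K lam Hl) as [N [_ HN]]. exists N. intros _. auto.
  - exists 0. intros Hc. lra.
Qed.

Definition Nf (K : nat) (lam : R) : nat := proj1_sig (constructive_indefinite_description _ (Nf_ex K lam)).

Lemma Nf_spec : forall K (lam : R), (lam < 1)%R -> forall a L, Nf K lam <= L ->
  (INR (count_in (fun p => ~ (V 0 p < K)%nat) a L) >= lam * INR L)%R.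
Proof. intros K lam. unfold Nf. destruct constructive_indefinite_description as [N HN]. simpl. auto. Qed.

Definition aa (j : nat) := Pl 0 j.
Definition small (s : Om) (K p : nat) := exists k, s p = Some k /\ k < K.

Definition Fcond (s : Om) := forall m k j, k <= j -> s m = Some k -> s (m + aa j) = Some (S k).
Definition Ccond (s : Om) := forall m k j, ~ (exists k', s m = Some k' /\ k' <= k) ->
  ~ (s (m + aa j) = Some (S k) /\ s (m + aa (S j)) = Some (S k)).
Definition Dcond (s : Om) := forall K (lam : R), (lam < 1)%R -> forall a L, Nf K lam <= L ->
  (INR (count_in (fun p => ~ small s K p) a L) >= lam * INR L)%R.
Definition P (s : Om) := Fcond s /\ Ccond s /\ Dcond s.

Lemma transfer : forall n z s m k, agree n z s -> m < n -> k < n -> (z m = Some k <-> s m = Some k).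
Proof.
  intros n z s m k H Hm Hk. split; intros E.
  - apply (tr_small n (z m)); auto.
  - apply (tr_small n (s m)); auto. symmetry; auto.
Qed.

Lemma P_closed : forall z, (forall n, exists s, P s /\ agree n z s) -> P z.
Proof.
  intros z H. split; [|split].
  - intros m k j Hk E. destruct (H (S (Nat.max (m + aa j) (S k)))) as [s [[HF _] Ha]].
    apply (transfer _ z s _ _ Ha); try lia.
    apply HF; auto. apply (transfer _ z s _ _ Ha); auto; lia.
  - intros m k j Hn [E1 E2].
    destruct (H (S (Nat.max (Nat.max (m + aa j) (m + aa (S j))) (Nat.max m (S k))))) as [s [[_ [HC _]] Ha]].
    apply (HC m k j).
    + intros [k' [E Hk']]. apply Hn. exists k'. split; auto.
      apply (transfer _ z s _ _ Ha); auto; lia.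
    + split; apply (transfer _ z s _ _ Ha); auto; lia.
  - intros K lam Hl a L HL.
    destruct (H (S (Nat.max (a + L) K))) as [s [[_ [_ HD]] Ha]].
    erewrite count_ext. apply (HD K lam Hl a L HL).
    intros i Hi. simpl. unfold small. split; intros Hns [k [E Hk]]; apply Hns; exists k; split; auto.
    + apply (transfer _ z s _ _ Ha); auto; lia.
    + apply (transfer _ z s _ _ Ha); auto; lia.
Qed.

Definition sh (s : Om) : Om := fun m => s (S m).

Lemma P_sh : forall s, P s -> P (sh s).
Proof.
  intros s [HF [HC HD]]. split; [|split].
  - intros m k j Hk E. unfold sh in *. apply (HF (S m) k j); auto.
  - intros m k j Hn. unfold sh in *. apply (HC (S m) k j). auto.
  - intros K lam Hl a L HL. erewrite count_ext. apply (HD K lam Hl (S a) L HL).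
    intros i Hi. unfold small, sh. simpl. tauto.
Qed.

Definition wit : Om := fun p => Some (V 0 p).
Definition bot : Om := fun _ => None.

Lemma P_wit : P wit.
Proof.
  split; [|split].
  - intros m k j Hk E. unfold wit in *. injection E as E. unfold aa. rewrite V_add by lia. f_equal. lia.
  - intros m k j Hn [E1 E2]. unfold wit, aa in *. injection E1 as E1. injection E2 as E2.
    apply (V_noboth j 0 m k); auto.
    destruct (le_lt_dec (V 0 m) k); auto. exfalso. apply Hn. eauto.
  - intros K lam Hl a L HL. erewrite count_ext. apply (Nf_spec K lam Hl a L HL).
    intros i Hi. unfold small, wit. split.
    + intros H1 H2. apply H1. eauto.
    + intros H1 [k [E Hk]]. injection E as E. apply H1. lia.
Qed.

Lemma P_bot : P bot.
Proof.
  split; [|split].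
  - intros m k j Hk E. discriminate.
  - intros m k j Hn [E1 E2]. discriminate.
  - intros K lam Hl a L HL. rewrite count_true.
    + pose proof (pos_INR L). nra.
    + intros p [k [E _]]. discriminate.
Qed.

Definition X := {s : Om | P s}.
Definition dX (x y : X) : R := D (proj1_sig x) (proj1_sig y).
Definition TX (x : X) : X := exist _ (sh (proj1_sig x)) (P_sh _ (proj2_sig x)).
Definition xw : X := exist _ wit P_wit.
Definition xb : X := exist _ bot P_bot.

Lemma X_eq : forall x y : X, proj1_sig x = proj1_sig y -> x = y.
Proof. intros [x Hx] [y Hy] E. simpl in E. subst. f_equal. apply proof_irrelevance. Qed.

Lemma iter_TX : forall k x m, proj1_sig (Nat.iter k TX x) m = proj1_sig x (k + m).
Proof. induction k; intros x m; [reflexivity|]. simpl. unfold sh. rewrite IHk. f_equal. lia. Qed.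

Lemma half_small : forall r : R, (0 < r)%R -> exists n, ((/2)^n < r)%R.
Proof.
  intros r Hr. destruct (pow_lt_1_zero (/2) ltac:(rewrite Rabs_pos_eq; lra) r Hr) as [N HN].
  exists N. specialize (HN N (le_n N)). rewrite Rabs_pos_eq in HN; auto. left; apply half_pow_pos.
Qed.

Definition pat (n : nat) (s : Om) : list nat := map (fun m => tr (S n) (s m)) (seq 0 (S n)).

Lemma map_seq_eq : forall (f g : nat -> nat) k, map f (seq 0 k) = map g (seq 0 k) -> forall m, m < k -> f m = g m.
Proof.
  intros f g k H m Hm.
  assert (E : forall h : nat -> nat, nth m (map h (seq 0 k)) 0 = h m).
  { intros h. rewrite nth_indep with (d' := h 0). rewrite map_nth, seq_nth by lia. reflexivity.
    rewrite length_map, length_seq. lia. }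
  rewrite <- (E f), <- (E g), H. reflexivity.
Qed.

Lemma pat_agree : forall n s s', pat n s = pat n s' -> agree (S n) s s'.
Proof. intros n s s' H m Hm. apply (map_seq_eq (fun m => tr (S n) (s m)) (fun m => tr (S n) (s' m)) (S n)); auto. Qed.

Fixpoint words (k b : nat) : list (list nat) :=
  match k with
  | 0 => [[]]
  | S k' => flat_map (fun w => map (fun e => w ++ [e]) (seq 0 (S b))) (words k' b)
  end.

Lemma in_words : forall k b (f : nat -> nat), (forall m, m < k -> f m <= b) -> In (map f (seq 0 k)) (words k b).
Proof.
  induction k; intros b f Hf.
  - simpl. auto.
  - assert (Hw : words (S k) b = flat_map (fun w => map (fun e => w ++ [e]) (seq 0 (S b))) (words k b)) by reflexivity.
    rewrite Hw, seq_S, map_app. change (map f [0 + k]) with [f k]. apply in_flat_map. exists (map f (seq 0 k)). split.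
    + apply IHk. intros; apply Hf; lia.
    + apply in_map_iff. exists (f k). split; auto. apply in_seq. specialize (Hf k). lia.
Qed.

Lemma tr_le : forall n o, tr n o <= n.
Proof. intros n [k|]; simpl; lia. Qed.

Lemma pat_in : forall n s, In (pat n s) (words (S n) (S n)).
Proof. intros n s. apply in_words. intros; apply tr_le. Qed.

Lemma X_compact : is_compact dX.
Proof.
  intros I U Hopen Hcov. apply NNPP. intros Hno.
  set (good := fun n (x : X) => exists l : list I, forall z : X,
     agree n (proj1_sig x) (proj1_sig z) -> exists i, In i l /\ U i z).
  assert (Hg0 : ~ good 0 xb).
  { intros [l Hl]. apply Hno. exists l. intros z. apply Hl. apply agree_0. }
  assert (Hsplit : forall n x, (forall y : X, agree n (proj1_sig x) (proj1_sig y) -> good (S n) y) -> good n x).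
  { intros n x Hy.
    assert (Hws : forall ws, exists l : list I, forall z : X, agree n (proj1_sig x) (proj1_sig z) ->
       In (pat n (proj1_sig z)) ws -> exists i, In i l /\ U i z).
    { induction ws as [|w ws IH].
      - exists []. intros z _ [].
      - destruct IH as [l' Hl'].
        destruct (classic (exists y : X, agree n (proj1_sig x) (proj1_sig y) /\ pat n (proj1_sig y) = w)) as [[y [Hy1 Hy2]]|Hn].
        + destruct (Hy y Hy1) as [ly Hly]. exists (ly ++ l'). intros z Hz [Hw|Hw].
          * destruct (Hly z) as [i [Hi1 Hi2]].
            { apply pat_agree. congruence. }
            exists i. split; auto. apply in_or_app; auto.
          * destruct (Hl' z Hz Hw) as [i [Hi1 Hi2]]. exists i. split; auto. apply in_or_app; auto.
        + exists l'. intros z Hz [Hw|Hw].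
          * exfalso. apply Hn. exists z. auto.
          * auto. }
    destruct (Hws (words (S n) (S n))) as [l Hl]. exists l. intros z Hz. apply Hl; auto. apply pat_in. }
  assert (Hstep : forall n (x : X), exists y : X, ~ good n x -> agree n (proj1_sig x) (proj1_sig y) /\ ~ good (S n) y).
  { intros n x. destruct (classic (good n x)) as [H|H].
    - exists x. tauto.
    - assert (~ forall y : X, agree n (proj1_sig x) (proj1_sig y) -> good (S n) y) by (intro; apply H, Hsplit; auto).
      apply not_all_ex_not in H0. destruct H0 as [y Hy]. exists y. intros _.
      apply imply_to_and in Hy. auto. }
  set (f := fun n x => proj1_sig (constructive_indefinite_description _ (Hstep n x))).
  assert (Hf : forall n x, ~ good n x -> agree n (proj1_sig x) (proj1_sig (f n x)) /\ ~ good (S n) (f n x)).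
  { intros n x. unfold f. destruct constructive_indefinite_description as [y Hy]. simpl. auto. }
  set (c := fun n => nat_rect (fun _ => X) xb (fun n' y => f n' y) n).
  assert (Hc_S : forall n, c (S n) = f n (c n)) by reflexivity.
  assert (Hbad : forall n, ~ good n (c n)).
  { induction n; [exact Hg0|]. rewrite Hc_S. apply Hf. auto. }
  assert (Hch : forall n, agree n (proj1_sig (c n)) (proj1_sig (c (S n)))).
  { intros n. rewrite Hc_S. apply Hf. auto. }
  assert (Hfar : forall k n, agree n (proj1_sig (c n)) (proj1_sig (c (n + k)))).
  { induction k; intros n.
    - rewrite Nat.add_0_r. intros m _. reflexivity.
    - eapply agree_trans. apply IHk. replace (n + S k) with (S (n + k)) by lia.
      eapply agree_mono. apply Hch. lia. }
  set (z := fun m => match excluded_middle_informative (exists k n, m < n /\ k < n /\ proj1_sig (c n) m = Some k) with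
     | left H => Some (proj1_sig (constructive_indefinite_description _ H))
     | right _ => None end).
  assert (Hz : forall n, agree n z (proj1_sig (c n))).
  { intros n m Hm. unfold z. destruct excluded_middle_informative as [H|H].
    - destruct constructive_indefinite_description as [k [n0 [Hm0 [Hk0 E0]]]]. simpl.
      assert (E1 : proj1_sig (c (n0 + n)) m = Some k).
      { apply (tr_small n0 (proj1_sig (c n0) m)); auto. apply Hfar. auto. }
      pose proof (Hfar n0 n m) as _.
      assert (tr n (proj1_sig (c n) m) = tr n (proj1_sig (c (n + n0)) m)) by (apply Hfar; auto).
      rewrite H0. rewrite Nat.add_comm, E1. reflexivity.
    - simpl. destruct (proj1_sig (c n) m) as [k|] eqn:E; simpl; auto.
      destruct (le_lt_dec n k); [lia|]. exfalso. apply H. exists k, n. auto. }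
  assert (Pz : P z).
  { apply P_closed. intros n. exists (proj1_sig (c n)). split; auto. apply proj2_sig. }
  set (zX := exist P z Pz : X).
  destruct (Hcov zX) as [i Hi]. destruct (Hopen i zX Hi) as [r [Hr Hball]].
  destruct (half_small r Hr) as [n Hn].
  apply (Hbad n). exists [i]. intros y Hy. exists i. split; [left; auto|].
  apply Hball. unfold dX. simpl.
  assert (agree n z (proj1_sig y)) by (eapply agree_trans; [apply Hz| exact Hy]).
  apply D_lt in H. lra.
Qed.

Lemma agree_sh : forall n s s', agree (S n) s s' -> agree n (sh s) (sh s').
Proof.
  intros n s s' H m Hm. unfold sh. rewrite (tr_mono n (S n)) by lia.
  rewrite (tr_mono n (S n) (s' (S m))) by lia. rewrite H by lia. reflexivity.
Qed.

Lemma dX_metric : is_metric dX.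
Proof.
  unfold dX. split; [|split; [|split]].
  - intros; apply D_nonneg.
  - intros x y. rewrite D_zero. split; [apply X_eq|intros ->; reflexivity].
  - intros; apply D_sym.
  - intros; apply D_tri.
Qed.

Lemma TX_cont : is_continuous dX TX.
Proof.
  intros x eps He. destruct (half_small eps He) as [n Hn].
  exists ((/2)^(S n))%R. split; [apply half_pow_pos|].
  intros y Hy. unfold dX in *. apply D_lt in Hy. simpl. 
  assert (agree n (sh (proj1_sig x)) (sh (proj1_sig y))) by (apply agree_sh; auto).
  apply D_lt in H. lra.
Qed.

Lemma small_bound : forall s K (lam : R) b L, P s -> (lam < 1)%R -> Nf K lam <= L ->
  (INR (count_in (small s K) b L) <= (1 - lam) * INR L)%R.
Proof.
  intros s K lam b L [_ [_ HD]] Hl HL. specialize (HD K lam Hl b L HL).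
  pose proof (count_compl (small s K) b L) as Hc. apply (f_equal INR) in Hc. rewrite plus_INR in Hc.
  lra.
Qed.

Lemma union_bound : forall (x y : Om) n a L (B : R),
  (forall b, (INR (count_in (small x n) b L) <= B)%R) ->
  (forall b, (INR (count_in (small y n) b L) <= B)%R) ->
  forall n', (INR (count_in (fun k => exists t, (t < n')%nat /\ (small x n (k+t)%nat \/ small y n (k+t)%nat)) a L)
     <= INR n' * (2 * B))%R.
Proof.
  intros x y n a L B Hx Hy. induction n'.
  - rewrite count_false. simpl. lra. intros p [t [Ht _]]. lia.
  - set (Q := fun n' k => exists t, t < n' /\ (small x n (k+t) \/ small y n (k+t))).
    assert (H1 : count_in (Q (S n')) a L <= count_in (fun k => Q n' k \/ (small x n (k+n') \/ small y n (k+n'))) a L).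
    { apply count_mono. intros i _ [t [Ht Hs]]. unfold Q.
      destruct (Nat.eq_dec t n'); [subst; right; auto|left; exists t; split; auto; lia]. }
    pose proof (count_or (Q n') (fun k => small x n (k+n') \/ small y n (k+n')) a L) as H2.
    pose proof (count_or (fun k => small x n (k+n')) (fun k => small y n (k+n')) a L) as H3.
    assert (E1 : count_in (fun k => small x n (k+n')) a L = count_in (small x n) (a+n') L).
    { apply count_ext. intros i _. replace (a + i + n') with (a + n' + i) by lia. tauto. }
    assert (E2 : count_in (fun k => small y n (k+n')) a L = count_in (small y n) (a+n') L).
    { apply count_ext. intros i _. replace (a + i + n') with (a + n' + i) by lia. tauto. }
    fold (Q (S n')). 
    assert (count_in (Q (S n')) a L <= count_in (Q n') a L + (count_in (small x n) (a+n') L + count_in (small y n) (a+n') L)) by lia.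
    apply le_INR in H. rewrite !plus_INR in H. rewrite S_INR.
    specialize (Hx (a+n')). specialize (Hy (a+n')). fold (Q n') in IHn'. lra.
Qed.

Lemma proximal : forall x y : X, banach_proximal dX TX x y.
Proof.
  intros [x Px] [y Py] eps He lam Hl.
  destruct (half_small eps He) as [n0 Hn0]. set (n := S n0).
  assert (Hn : ((/2)^n < eps)%R) by (pose proof (half_pow_lt n0 n ltac:(unfold n; lia)); lra).
  assert (HnR : (1 <= INR n)%R) by (unfold n; rewrite S_INR; pose proof (pos_INR n0); lra).
  set (lam' := (1 - (1 - lam) / (2 * INR n))%R).
  assert (Hl' : (lam' < 1)%R).
  { unfold lam'. assert (0 < (1 - lam) / (2 * INR n))%R by (apply Rdiv_lt_0_compat; lra). lra. }
  exists (Nat.max 1 (Nf n lam')). split; [lia|]. intros a L HL.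
  set (B := ((1 - lam') * INR L)%R).
  assert (Hbad := union_bound x y n a L B
     (fun b => small_bound x n lam' b L Px Hl' ltac:(lia))
     (fun b => small_bound y n lam' b L Py Hl' ltac:(lia)) n).
  set (bad := fun k => exists t, t < n /\ (small x n (k+t) \/ small y n (k+t))) in *.
  assert (Hmono : count_in (fun p => ~ bad p) a L <=
     count_in (fun k => (dX (Nat.iter k TX (exist _ x Px)) (Nat.iter k TX (exist _ y Py)) < eps)%R) a L).
  { apply count_mono. intros i _ Hnb.
    assert (agree n (proj1_sig (Nat.iter (a+i) TX (exist _ x Px))) (proj1_sig (Nat.iter (a+i) TX (exist _ y Py)))).
    { intros m Hm. rewrite !iter_TX. simpl. rewrite !tr_big; auto.
      - intros k Ek. destruct (le_lt_dec n k); auto. exfalso. apply Hnb. exists m. split; auto. right. exists k. auto.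
      - intros k Ek. destruct (le_lt_dec n k); auto. exfalso. apply Hnb. exists m. split; auto. left. exists k. auto. }
    unfold dX. apply D_lt in H. lra. }
  pose proof (count_compl bad a L) as Hc. apply (f_equal INR) in Hc. rewrite plus_INR in Hc.
  apply le_INR in Hmono.
  assert (INR n * (2 * B) = (1 - lam) * INR L)%R.
  { unfold B, lam'. field. lra. }
  pose proof (pos_INR L). eapply Rge_trans; [apply Rle_ge; exact Hmono|]. lra.
Qed.

Lemma asym_sym : forall x y, asymptotic dX TX x y -> asymptotic dX TX y x.
Proof. intros x y H eps He. destruct (H eps He) as [M HM]. exists M. intros n Hn. unfold dX. rewrite D_sym. apply HM; auto. Qed.

Lemma nonasym_side : forall x y : X, asymptotic dX TX x y -> forall m k,
  proj1_sig x m = Some k -> ~ (exists k', proj1_sig y m = Some k' /\ k' <= k) -> False.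
Proof.
  intros x y Has m k Ex Hny.
  destruct (Has ((/2)^(S (S k)))%R (half_pow_pos _)) as [M HM].
  set (j := Nat.max k M).
  assert (Hgo : forall p, M <= p -> proj1_sig x p = Some (S k) -> proj1_sig y p = Some (S k)).
  { intros p Hp Ep. specialize (HM p Hp). unfold dX in HM. apply D_lt in HM.
    specialize (HM 0 ltac:(lia)). rewrite !iter_TX, Nat.add_0_r in HM.
    apply (tr_small _ _ _ _ HM Ep). lia. }
  destruct (proj2_sig x) as [HF _]. destruct (proj2_sig y) as [_ [HC _]].
  apply (HC m k j Hny). pose proof (Pl_ge j 0). pose proof (Pl_ge (S j) 0). unfold aa in *.
  split; apply Hgo; try (unfold j in *; lia); apply HF; auto; unfold j; lia.
Qed.

Lemma nonasym : forall x y : X, x <> y -> ~ asymptotic dX TX x y.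
Proof.
  intros x y Hne Has. apply Hne. apply X_eq. apply functional_extensionality. intros m.
  destruct (proj1_sig x m) as [k1|] eqn:E1, (proj1_sig y m) as [k2|] eqn:E2; auto.
  - destruct (lt_eq_lt_dec k1 k2) as [[H|H]|H]; [| subst; auto |].
    + exfalso. apply (nonasym_side x y Has m k1 E1). intros [k' [E Hk]]. rewrite E2 in E. injection E. lia.
    + exfalso. apply (nonasym_side y x (asym_sym _ _ Has) m k2 E2). intros [k' [E Hk]]. rewrite E1 in E. injection E. lia.
  - exfalso. apply (nonasym_side x y Has m k1 E1). intros [k' [E Hk]]. rewrite E2 in E. discriminate.
  - exfalso. apply (nonasym_side y x (asym_sym _ _ Has) m k2 E2). intros [k' [E Hk]]. rewrite E1 in E. discriminate.
Qed.

Lemma xb_xw : xb <> xw.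
Proof. intros H. apply (f_equal (fun x => proj1_sig x 0)) in H. simpl in H. unfold bot, wit in H. discriminate. Qed.

Local Open Scope R_scope.
Theorem mainTheorem2 :
  exists (X : Type) (d : X -> X -> R) (T : X -> X),
    is_TDS d T /\ (exists x y : X, x <> y) /\
    banach_scrambled d T (fun _ => True).
Proof.
  exists X, dX, TX. split; [|split].
  - split; [exact (inhabits xb)|]. split; [apply dX_metric|]. split; [apply X_compact|apply TX_cont].
  - exists xb, xw. apply xb_xw.
  - split.
    + exists xb, xw. split; auto. split; auto. apply xb_xw.
    + intros x y _ _ Hne. split; [apply proximal|apply nonasym; auto].
Qed.
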